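(* Let $(G,N,\vartheta)$ and $(H,M,\varphi)$ be character triples of finite groups with $(G,N,\vartheta)\geq_c(H,M,\varphi)$ via the pair $(\mathcal{P},\mathcal{P}')$. Let $N\leq J\leq G$ and let $\sigma_J:\mathrm{Irr}(J\mid\vartheta)\to\mathrm{Irr}(J\cap H\mid\varphi)$ be the $\mathbf{N}_H(J)$-equivariant bijection associated with $(\mathcal{P},\mathcal{P}')$. Then $$\left(\mathbf{N}_G(J)_\psi,J,\psi\right)\geq_c\left(\mathbf{N}_H(J)_\psi,J\cap H,\sigma_J(\psi)\right)$$ for every $\psi\in\mathrm{Irr}(J\mid\vartheta)$.
   Context: Character triples and $\geq_c$: a character triple $(G,N,\vartheta)$ consists of $N\trianglelefteq G$ and a $G$-invariant $\vartheta\in\mathrm{Irr}(N)$. A projective representation of $G$ associated with $\vartheta$ is a map $\mathcal{P}:G\to\mathrm{GL}_{\vartheta(1)}(\mathbb{C})$ with $\mathcal{P}(x)\mathcal{P}(y)=\alpha(x,y)\mathcal{P}(xy)$ for a factor set $\alpha$, such that $\mathcal{P}|_N$ is a representation affording $\vartheta$ and $\mathcal{P}(xn)=\mathcal{P}(x)\mathcal{P}(n)$, $\mathcal{P}(nx)=\mathcal{P}(n)\mathcal{P}(x)$ for $x\in G,n\in N$. One writes $(G,N,\vartheta)\geq_c(H,M,\varphi)$ via $(\mathcal{P},\mathcal{P}')$ if $G=NH$, $M=N\cap H$, $\mathbf{C}_G(N)\leq H$, $\mathcal{P}$ is a projective representation of $G$ associated with $\vartheta$ and $\mathcal{P}'$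 one of $H$ associated with $\varphi$, with factor sets $\alpha,\alpha'$ satisfying $\alpha|_{H\times H}=\alpha'$, and for every $c\in\mathbf{C}_G(N)$ the matrices $\mathcal{P}(c)$, $\mathcal{P}'(c)$ are scalar with the same scalar. The bijection $\sigma_J$ associated with $(\mathcal{P},\mathcal{P}')$: every $\psi\in\mathrm{Irr}(J\mid\vartheta)$ is afforded by $\mathcal{P}|_J\otimes\mathcal{Q}$ for some irreducible projective representation $\mathcal{Q}$ of $J$ that is constant on cosets of $N$ (with factor set inverse to that of $\mathcal{P}|_J$); then $\sigma_J(\psi)$ is the character afforded by $\mathcal{P}'|_{J\cap H}\otimes\mathcal{Q}|_{J\cap H}$. This is a well-defined $\mathbf{N}_H(J)$-equivariant bijection $\mathrm{Irr}(J\mid\vartheta)\to\mathrm{Irr}(J\cap H\mid\varphi)$. Subscripts such as $\mathbf{N}_G(J)_\psi$ denote stabilizers. *)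

(* Defs.v *)
From HB Require Import structures.
From mathcomp Require Import all_boot all_order all_algebra all_fingroup all_solvable.
From mathcomp Require Import all_field all_character.
From mathcomp Require Import inertia mxtens.
Set Implicit Arguments.
Unset Strict Implicit.
Unset Printing Implicit Defensive.
Import GRing.Theory Num.Theory.
Local Open Scope ring_scope.

Section CharTriples.
Variable gT : finGroupType.

Definition proj_repr (G : {set gT}) (n : nat) (P : gT -> 'M[algC]_n)
    (alpha : gT -> gT -> algC) :=
  (forall x, x \in G -> P x \in unitmx) /\
  (forall x y, x \in G -> y \in G -> P x *m P y = alpha x y *: P (x * y)%g).

Definition affords (N : {group gT}) (n : nat) (R : gT -> 'M[algC]_n)
    (chi : 'CF(N)) :=
  mx_repr N R /\ (forall x, x \in N -> chi x = \tr (R x)).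

Definition char_triple (G N : {group gT}) (theta : 'CF(N)) :=
  [/\ (N <| G)%g, theta \in irr N & (G \subset 'I[theta])%g].

Definition proj_repr_assoc (G N : {group gT}) (theta : 'CF(N)) (n : nat)
    (P : gT -> 'M[algC]_n) (alpha : gT -> gT -> algC) :=
  [/\ proj_repr G P alpha, affords P theta &
      forall x y, x \in G -> y \in N ->
        P (x * y)%g = P x *m P y /\ P (y * x)%g = P y *m P x].

Definition geq_c (G N : {group gT}) (theta : 'CF(N)) (H M : {group gT})
    (phi : 'CF(M)) (n m : nat) (P : gT -> 'M[algC]_n) (P' : gT -> 'M[algC]_m) :=
  [/\ char_triple G theta, char_triple H phi,
      [/\ (N * H)%g = G :> {set gT}, M :=: N :&: H & ('C_G(N) \subset H)%g] &
      exists alpha alpha' : gT -> gT -> algC,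
        [/\ proj_repr_assoc G theta P alpha, proj_repr_assoc H phi P' alpha',
            (forall x y, x \in H -> y \in H -> alpha x y = alpha' x y) &
            forall c, c \in ('C_G(N))%g ->
              exists a : algC, P c = a%:M /\ P' c = a%:M]].

Definition irr_over (J N : {group gT}) (theta : 'CF(N)) (psi : 'CF(J)) :=
  psi \in irr J /\ '['Res[N] psi, theta] != 0.

Definition proj_irr (J : {set gT}) (q : nat) (Q : gT -> 'M[algC]_q) :=
  (0 < q)%N /\
  forall U : 'M[algC]_q, (forall x, x \in J -> (U *m Q x <= U)%MS) ->
    U = 0 \/ row_full U.

End CharTriples.

(* Main.v *)
Require Import Defs.
From HB Require Import structures.
From mathcomp Require Import all_boot all_order all_algebra all_fingroup all_solvable.
From mathcomp Require Import all_field all_character.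
From mathcomp Require Import inertia mxtens.
From Stdlib Require Import IndefiniteDescription.
Import GRing.Theory Num.Theory.

Module Aux.
Set Implicit Arguments.
Unset Strict Implicit.
Unset Printing Implicit Defensive.
Local Open Scope group_scope.
Local Open Scope ring_scope.

Section Tens.
Variable F : fieldType.

Lemma mxtens_index_eq m n (i j : 'I_m) (k l : 'I_n) :
  (mxtens_index (i, k) == mxtens_index (j, l)) = (i == j) && (k == l).
Proof. by rewrite (can_eq (@mxtens_indexK m n)) xpair_eqE. Qed.

Lemma sum_tens (m n : nat) (f : 'I_(m * n) -> F) :
  \sum_(s < m * n) f s = \sum_(i < m) \sum_(k < n) f (mxtens_index (i, k)).
Proof.
rewrite pair_big /= (reindex (@mxtens_index m n)) /=; last first.
  by exists (@mxtens_unindex m n) => s _; rewrite (mxtens_indexK, mxtens_unindexK).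
by apply: eq_bigr => -[i k].
Qed.

Lemma tens_eqP (m n p q : nat) (A B : 'M[F]_(m * n, p * q)) :
  (forall i k j l, A (mxtens_index (i, k)) (mxtens_index (j, l)) =
                   B (mxtens_index (i, k)) (mxtens_index (j, l))) -> A = B.
Proof.
move=> h; apply/matrixP => s t.
by case: (mxtens_indexP s) => i k; case: (mxtens_indexP t) => j l; apply: h.
Qed.

Lemma tensmx11 (m n : nat) : (1%:M : 'M[F]_m) *t (1%:M : 'M[F]_n) = 1%:M.
Proof.
apply: tens_eqP => i k j l; rewrite tensmxE !mxE mxtens_index_eq.
by case: (i == j); case: (k == l); rewrite ?mulr1 ?mulr0 ?mul0r.
Qed.

Lemma tens_scalar_scalar (m n : nat) (a b : F) :
  (a%:M : 'M[F]_m) *t (b%:M : 'M[F]_n) = (a * b)%:M.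
Proof.
apply: tens_eqP => i k j l; rewrite tensmxE !mxE mxtens_index_eq.
by case: (i == j); case: (k == l); rewrite ?mulr1n ?mulr0n ?mulr0 ?mul0r.
Qed.

Lemma tensmxZl (m n p q : nat) a (A : 'M[F]_(m, n)) (B : 'M[F]_(p, q)) :
  (a *: A) *t B = a *: (A *t B).
Proof. by apply: tens_eqP => i k j l; rewrite [LHS]tensmxE [RHS]mxE tensmxE mxE mulrA. Qed.

Lemma tensmxZr (m n p q : nat) a (A : 'M[F]_(m, n)) (B : 'M[F]_(p, q)) :
  A *t (a *: B) = a *: (A *t B).
Proof. by apply: tens_eqP => i k j l; rewrite [LHS]tensmxE [RHS]mxE tensmxE mxE mulrCA. Qed.

Lemma tensmxDl (m n p q : nat) (A A' : 'M[F]_(m, n)) (B : 'M[F]_(p, q)) :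
  (A + A') *t B = A *t B + A' *t B.
Proof. by apply: tens_eqP => i k j l; rewrite [LHS]tensmxE [RHS]mxE !tensmxE mxE mulrDl. Qed.

Lemma tensmx_suml (I : finType) (P : pred I) (m n p q : nat)
   (A : I -> 'M[F]_(m, n)) (B : 'M[F]_(p, q)) :
  (\sum_(i | P i) A i) *t B = \sum_(i | P i) (A i *t B).
Proof.
elim/big_rec2: _ => [|i x y _ <-]; first by rewrite tens0mx.
by rewrite tensmxDl.
Qed.

Lemma tens_cancel (m n p q : nat) (A : 'M[F]_(m, n)) (B C : 'M[F]_(p, q)) :
  A != 0 -> A *t B = A *t C -> B = C.
Proof.
move=> /matrix0Pn [i [j nzij]] eqBC; apply/matrixP => k l.
have := congr1 (fun M : 'M[F]_(m * p, n * q) => M (mxtens_index (i, k)) (mxtens_index (j, l))) eqBC.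
by rewrite /= !tensmxE => /(mulfI nzij).
Qed.
End Tens.


Section Tens2.
Variable F : fieldType.

Lemma sum_delta2 m n (f : 'I_m -> 'I_n -> F) (a : 'I_m) (l : 'I_n) (b : bool) :
  \sum_(c < m) \sum_(d < n) f c d * (((c == a) && b)%:R * (d == l)%:R)
  = b%:R * f a l.
Proof.
rewrite (bigD1 a) //= [X in _ + X]big1 => [|c /negbTE nca]; last first.
  by apply: big1 => d _; rewrite nca /= mul0r mulr0.
rewrite addr0 (bigD1 l) //= [X in _ + X]big1 => [|d /negbTE ndl]; last by rewrite ndl mulr0 mulr0.
by rewrite eqxx /= addr0 eqxx mulr1 mulrC.
Qed.

Lemma sum_delta2' m n (f : 'I_m -> 'I_n -> F) (b' : 'I_m) (k : 'I_n) (b : bool) :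
  \sum_(c < m) \sum_(d < n) ((b && (c == b'))%:R * (k == d)%:R) * f c d
  = b%:R * f b' k.
Proof.
rewrite (bigD1 b') //= [X in _ + X]big1 => [|c /negbTE nca]; last first.
  by apply: big1 => d _; rewrite nca andbF /= !mul0r.
rewrite addr0 (bigD1 k) //= [X in _ + X]big1 => [|d ndl]; last by rewrite eq_sym (negbTE ndl) mulr0 mul0r.
by rewrite !eqxx andbT /= addr0; case: b; rewrite ?mulr1 ?mul1r ?mulr0 ?mul0r.
Qed.

Lemma tens_comm n q (W : 'M[F]_(n * q)) : (0 < n)%N ->
  (forall A : 'M[F]_n, W *m (A *t 1%:M) = (A *t 1%:M) *m W) ->
  exists T : 'M[F]_q, W = 1%:M *t T.
Proof.
move=> n_gt0 cW.
have key a b i k j l : (j == b)%:R * W (mxtens_index (i, k)) (mxtens_index (a, l))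
   = (i == a)%:R * W (mxtens_index (b, k)) (mxtens_index (j, l)).
  have := congr1 (fun M : 'M[F]_(n * q) => M (mxtens_index (i, k)) (mxtens_index (j, l)))
     (cW (delta_mx a b)).
  rewrite /= !mxE !sum_tens.
  under eq_bigr do under eq_bigr do rewrite tensmxE !mxE.
  rewrite sum_delta2 => ->.
  under eq_bigr do under eq_bigr do rewrite tensmxE !mxE.
  by rewrite sum_delta2'.
pose i0 := Ordinal n_gt0.
exists (\matrix_(k, l) W (mxtens_index (i0, k)) (mxtens_index (i0, l))).
apply: tens_eqP => i k j l; rewrite tensmxE !mxE.
have := key j i0 i k i0 l; rewrite eqxx mul1r => ->.
by rewrite eq_sym.
Qed.

End Tens2.


Lemma unit_1tens (F : fieldType) n q (T : 'M[F]_q) : (0 < n)%N ->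
  (1%:M : 'M[F]_n) *t T \in unitmx -> T \in unitmx.
Proof.
move=> n_gt0 uT; pose U := invmx ((1%:M : 'M[F]_n) *t T).
have cU (A : 'M[F]_n) : U *m (A *t 1%:M) = (A *t 1%:M) *m U.
  have c1 : (1%:M *t T) *m (A *t 1%:M) = (A *t 1%:M) *m (1%:M *t T).
    by rewrite !tensmx_mul !mul1mx !mulmx1.
  rewrite -[LHS]mulmx1 -(mulmxV uT) mulmxA -[U *m _ *m _]mulmxA -c1.
  by rewrite !mulmxA mulVmx // mul1mx.
have [T' defU] := tens_comm n_gt0 cU.
have : (1%:M : 'M[F]_n) *t (T *m T') = 1%:M *t 1%:M.
  by rewrite tensmx11 -[1%:M in LHS]mulmx1 -tensmx_mul -defU mulmxV.
move/tens_cancel => /(_ _) eq1.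
have nz1 : (1%:M : 'M[F]_n) != 0.
  by apply/matrix0Pn; exists (Ordinal n_gt0), (Ordinal n_gt0); rewrite mxE eqxx oner_eq0.
by case/mulmx1_unit: (eq1 nz1).
Qed.

Section PS.
Variable gT : finGroupType.

Lemma proj_schur (J : {set gT}) q (Q : gT -> 'M[algC]_q) (B : 'M[algC]_q) :
  proj_irr J Q -> (forall x, x \in J -> B *m Q x = Q x *m B) ->
  exists lam, B = lam%:M.
Proof.
move=> [q_gt0 irrQ] cB.
have [lam rootl] : exists lam, root (char_poly B) lam.
  by apply/closed_rootP; rewrite size_char_poly; case: q q_gt0 {irrQ cB Q B}.
exists lam; set U := kermx (B - lam%:M).
have modU x : x \in J -> (U *m Q x <= U)%MS.
  move=> Jx; rewrite sub_kermx -mulmxA.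
  have -> : Q x *m (B - lam%:M) = (B - lam%:M) *m Q x.
    by rewrite mulmxBr mulmxBl cB // scalar_mxC.
  by rewrite mulmxA (sub_kermxP (submx_refl U)) mul0mx.
case: (irrQ U modU) => [U0 | fullU].
  by move: rootl; rewrite -eigenvalue_root_char /eigenvalue /eigenspace -/U U0 eqxx.
apply/eqP; rewrite -subr_eq0; apply/eqP.
have := fullU; rewrite -sub1mx sub_kermx mul1mx => /eqP.
done.
Qed.
End PS.


Section AbsIrr.
Variable gT : finGroupType.
Variables (A : {group gT}) (k : nat) (r : gT -> 'M[algC]_k) (pf : mx_repr A r).
Variable chi : 'CF(A).
Hypothesis chi_irr : chi \in irr A.
Hypothesis chi_tr : forall x, x \in A -> chi x = \tr (r x).

Lemma repr_char_eq : chi = cfRepr (MxRepresentation pf).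
Proof.
apply/cfunP => x; rewrite cfunE /=.
case: (boolP (x \in A)) => Ax; first by rewrite chi_tr // mulr1n.
by rewrite mulr0n cfun0.
Qed.

Lemma abs_irr_of : mx_absolutely_irreducible (MxRepresentation pf).
Proof.
have [rG irrG defchi] := irr_reprP chi_irr.
have sim : mx_rsim rG (MxRepresentation pf).
  by apply: cfRepr_inj; rewrite -defchi -repr_char_eq.
exact: (@groupC gT A _ _ (mx_rsim_irr sim irrG)).
Qed.

Lemma repr_dim_gt0 : (0 < k)%N.
Proof. by case/mx_abs_irrP: abs_irr_of. Qed.

Lemma schur_repr (Z : 'M[algC]_k) :
  (forall x, x \in A -> Z *m r x = r x *m Z) -> exists a, Z = a%:M.
Proof.
move=> cZ; have /is_scalar_mxP[a ->] : is_scalar_mx Z.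
  by apply: (mx_abs_irr_cent_scalar abs_irr_of); apply/centgmxP => x Ax; apply: cZ.
by exists a.
Qed.

Lemma tens_comm_repr q (W : 'M[algC]_(k * q)) :
  (forall x, x \in A -> W *m (r x *t 1%:M) = (r x *t 1%:M) *m W) ->
  exists T : 'M[algC]_q, W = 1%:M *t T.
Proof.
move=> cW; have /mx_abs_irrP[k_gt0 [a_ defB]] := abs_irr_of.
apply: tens_comm => // B; rewrite [B]defB tensmx_suml mulmx_suml mulmx_sumr.
apply: eq_bigr => x Ax; rewrite tensmxZl -scalemxAl -scalemxAr; congr (_ *: _).
exact: cW.
Qed.

End AbsIrr.


Lemma unit_neq0 (F : fieldType) k (A : 'M[F]_k) : (0 < k)%N -> A \in unitmx -> A != 0.
Proof.
case: k A => // k A _ uA; apply/eqP => A0; move: uA.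
by rewrite A0 unitmxE det0 unitr0.
Qed.

Lemma scale_id_eq1 (F : fieldType) m k (A : 'M[F]_(m, k)) a :
  A != 0 -> a *: A = A -> a = 1.
Proof.
move=> nzA /eqP; rewrite -subr_eq0 -{2}[A]scale1r -scalerBl scalemx_eq0 (negbTE nzA).
by rewrite orbF subr_eq0 => /eqP.
Qed.

Section Main.
Variables (gT : finGroupType) (G N H M J : {group gT}).
Variables (theta : 'CF(N)) (phi : 'CF(M)) (n m : nat).
Variables (P : gT -> 'M[algC]_n) (P' : gT -> 'M[algC]_m).
Variables (alpha alpha' : gT -> gT -> algC).
Hypothesis nNG : (N <| G)%g.
Hypothesis th_irr : theta \in irr N.
Hypothesis nMH : (M <| H)%g.
Hypothesis phi_irr : phi \in irr M.
Hypothesis NH : (N * H)%g = G :> {set gT}.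
Hypothesis defM : M :=: N :&: H.
Hypothesis CGN : ('C_G(N) \subset H)%g.
Hypothesis Punit : forall x, x \in G -> P x \in unitmx.
Hypothesis Pmul : forall x y, x \in G -> y \in G -> P x *m P y = alpha x y *: P (x * y)%g.
Hypothesis Prep : mx_repr N P.
Hypothesis Ptr : forall x, x \in N -> theta x = \tr (P x).
Hypothesis Pas : forall x y, x \in G -> y \in N ->
        P (x * y)%g = P x *m P y /\ P (y * x)%g = P y *m P x.
Hypothesis P'unit : forall x, x \in H -> P' x \in unitmx.
Hypothesis P'mul : forall x y, x \in H -> y \in H -> P' x *m P' y = alpha' x y *: P' (x * y)%g.
Hypothesis P'rep : mx_repr M P'.
Hypothesis P'tr : forall x, x \in M -> phi x = \tr (P' x).
Hypothesis P'as : forall x y, x \in H -> y \in M ->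
        P' (x * y)%g = P' x *m P' y /\ P' (y * x)%g = P' y *m P' x.
Hypothesis aeq : forall x y, x \in H -> y \in H -> alpha x y = alpha' x y.
Hypothesis Csc : forall c, c \in ('C_G(N))%g -> exists a : algC, P c = a%:M /\ P' c = a%:M.
Hypothesis NJ : N \subset J.
Hypothesis JG : J \subset G.
Variable psi : 'CF(J).
Hypothesis psi_irr : psi \in irr J.
Variables (q : nat) (Q : gT -> 'M[algC]_q) (beta : gT -> gT -> algC).
Hypothesis Qunit : forall x, x \in J -> Q x \in unitmx.
Hypothesis Qmul : forall x y, x \in J -> y \in J -> Q x *m Q y = beta x y *: Q (x * y)%g.
Hypothesis QN : forall x y, x \in J -> y \in N -> Q (x * y)%g = Q x.
Hypothesis Qirr : proj_irr J Q.
Hypothesis Xrep : mx_repr J (fun x => P x *t Q x).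
Hypothesis Xtr : forall x, x \in J -> psi x = \tr (P x *t Q x).
Variable chi : 'CF(J :&: H).
Hypothesis Yrep : mx_repr (J :&: H) (fun x => P' x *t Q x).
Hypothesis Ytr : forall x, x \in J :&: H -> chi x = \tr (P' x *t Q x).

Local Notation X := (fun x => P x *t Q x).
Let XR := MxRepresentation Xrep.
Local Notation K := ('I_G[psi])%G.
Local Notation K' := ('I_H[psi])%G.

Lemma n_gt0 : (0 < n)%N. Proof. exact (repr_dim_gt0 Prep th_irr Ptr). Qed.
Lemma m_gt0 : (0 < m)%N. Proof. exact (repr_dim_gt0 P'rep phi_irr P'tr). Qed.
Lemma q_gt0 : (0 < q)%N. Proof. by case: Qirr. Qed.

Lemma KG : K \subset G. Proof. exact: subsetIl. Qed.
Lemma JK : J \subset K. Proof. exact: sub_Inertia. Qed.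
Lemma KnJ : K \subset 'N(J). Proof. exact: norm_Inertia. Qed.
Lemma inK_G x : x \in K -> x \in G. Proof. exact: (subsetP KG). Qed.
Lemma inJ_K x : x \in J -> x \in K. Proof. exact: (subsetP JK). Qed.
Lemma inJ_G x : x \in J -> x \in G. Proof. exact: (subsetP JG). Qed.
Lemma inN_J x : x \in N -> x \in J. Proof. exact: (subsetP NJ). Qed.

Lemma P1 : P 1%g = 1%:M. Proof. by case: Prep. Qed.

Lemma alpha1 x : x \in G -> alpha 1%g x = 1.
Proof.
move=> Gx; have := Pmul (group1 G) Gx; rewrite P1 mul1mx mul1g => /esym.
by apply: scale_id_eq1; apply: unit_neq0 n_gt0 (Punit Gx).
Qed.

Lemma Q1 : Q 1%g = (beta 1 1)%:M.
Proof.
have := Qmul (group1 J) (group1 J); rewrite mulg1 => e.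
have u1 := Qunit (group1 J).
by rewrite -[Q 1%g]mulmx1 -(mulmxV u1) mulmxA e -scalemxAl mulmxV // scalemx1.
Qed.

Lemma beta11 : beta 1 1 != 0.
Proof.
apply/eqP => b0; have := unit_neq0 q_gt0 (Qunit (group1 J)).
by rewrite Q1 b0 -scalemx1 scale0r eqxx.
Qed.

Lemma QNone y : y \in N -> Q y = Q 1%g.
Proof. by move=> Ny; rewrite -(QN (group1 J) Ny) mul1g. Qed.

Lemma XN y : y \in N -> X y = beta 1 1 *: (P y *t 1%:M).
Proof. by move=> Ny; rewrite /= QNone // Q1 -[(beta 1 1)%:M]scalemx1 tensmxZr. Qed.

Lemma Xunit x : x \in J -> X x \in unitmx.
Proof. exact: (repr_mx_unit XR). Qed.

Lemma XM : {in J &, forall x y, X (x * y)%g = X x *m X y}.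
Proof. by case: Xrep. Qed.

Lemma tens_unit k k' (A : 'M[algC]_k) (B : 'M[algC]_k') :
  (0 < k)%N -> (0 < k')%N -> A \in unitmx -> B \in unitmx -> A *t B \in unitmx.
Proof. by move=> k0 k'0; apply: tensmx_unit; rewrite -lt0n. Qed.

Lemma EXT r : r \in K -> exists T : 'M[algC]_q, T \in unitmx /\
  forall j, j \in J -> (P r *t T) *m X j = X (j ^ r^-1)%g *m (P r *t T).
Proof.
move=> Kr; have Gr := inK_G Kr.
have nJr' : r^-1%g \in 'N(J) by rewrite groupV (subsetP KnJ).
have Xr : mx_repr J (fun j => X (j ^ r^-1)%g).
  split; first by rewrite /= conj1g; case: Xrep.
  by move=> x y Jx Jy; rewrite /= conjMg XM ?memJ_norm.
have Ir' : r^-1%g \in 'I[psi] by rewrite groupV; case/setIP: Kr.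
have trr : forall x, x \in J -> psi x = \tr (X (x ^ r^-1)%g).
  by move=> x Jx; rewrite -Xtr ?memJ_norm // (inertia_valJ _ Ir').
have [B _ freeB hB] : mx_rsim XR (MxRepresentation Xr).
  apply: cfRepr_inj.
  by rewrite -(repr_char_eq Xrep Xtr) -(repr_char_eq Xr trr).
have uB : B \in unitmx by rewrite -row_free_unit.
pose S := invmx B.
have hS j : j \in J -> S *m X j = X (j ^ r^-1)%g *m S.
  move=> Jj; have := hB j Jj; rewrite /= => e.
  rewrite -[LHS]mulmx1 -(mulmxV uB) !mulmxA -[S *m _ *m B]mulmxA e.
  by rewrite mulmxA mulVmx // mul1mx.
pose W := (invmx (P r) *t 1%:M) *m S.
have uPr := Punit Gr.
have eX y : y \in N -> P y *t 1%:M = (beta 1 1)^-1 *: X y.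
  by move=> Ny; rewrite XN // scalerA mulVf ?beta11 // scale1r.
have cW y : y \in N -> W *m (P y *t 1%:M) = (P y *t 1%:M) *m W.
  move=> Ny.
  have Ny' : (y ^ r^-1)%g \in N.
    by rewrite memJ_norm // groupV (subsetP (normal_norm nNG)).
  have eP : invmx (P r) *m P (y ^ r^-1)%g = P y *m invmx (P r).
    have e1 : P (y ^ r^-1)%g *m P r = P r *m P y.
      by rewrite -(Pas Gr Ny').2 -(Pas Gr Ny).1 -conjgCV.
    rewrite -[LHS]mulmx1 -(mulmxV uPr) mulmxA -[invmx (P r) *m _ *m P r]mulmxA e1.
    by rewrite !mulmxA mulVmx // mul1mx.
  have e2 : S *m (P y *t 1%:M) = (P (y ^ r^-1)%g *t 1%:M) *m S.
    by rewrite eX // -scalemxAr hS ?inN_J // scalemxAl -(eX _ Ny').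
  by rewrite /W -mulmxA e2 mulmxA tensmx_mul eP -tensmx_mul !mulmxA.
have [T defW] := tens_comm_repr Prep th_irr Ptr cW.
have eS : S = P r *t T.
  have : (P r *t 1%:M) *m W = S.
    by rewrite /W mulmxA tensmx_mul mulmxV // mulmx1 tensmx11 mul1mx.
  by rewrite defW tensmx_mul mulmx1 mul1mx => <-.
exists T; split.
  apply: (unit_1tens n_gt0); rewrite -defW /W unitmx_mul tens_unit ?unitmx1 ?unitmx_inv //.
  - exact: n_gt0.
  - exact: q_gt0.
move=> j Jj; rewrite -eS; exact: hS.
Qed.


Section WithTf.
Variable Tf : gT -> 'M[algC]_q.
Hypothesis Tf1 : Tf 1%g = 1%:M.
Hypothesis TfU : forall r, r \in K -> Tf r \in unitmx.
Hypothesis TfI : forall r j, r \in K -> j \in J ->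
  (P r *t Tf r) *m X j = X (j ^ r^-1)%g *m (P r *t Tf r).

Definition rep x := repr (x *: J)%g.
Definition u x := ((rep x)^-1 * x)%g.
Definition Rm x := (P (rep x) *t Tf (rep x)) *m X (u x).
Definition Qt x := alpha (rep x) (u x) *: (Tf (rep x) *m Q (u x)).

Lemma rep_in x : x \in K -> rep x \in K /\ u x \in J.
Proof.
move=> Kx; have : rep x \in (x *: J)%g := mem_repr _ (lcoset_refl J x).
rewrite mem_lcoset => hj; split.
  by rewrite -(mulKVg x (rep x)) groupM // inJ_K.
by rewrite /u -[x in (_ * x)%g]invgK -invMg groupV.
Qed.

Lemma rep_mulJ x j : j \in J -> rep (x * j)%g = rep x.
Proof. by move=> Jj; rewrite /rep lcosetM lcoset_id. Qed.

Lemma rep_J j : j \in J -> rep j = 1%g.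
Proof. by move=> Jj; rewrite /rep lcoset_id // repr_group. Qed.

Lemma u_J j : j \in J -> u j = j.
Proof. by move=> Jj; rewrite /u rep_J // invg1 mul1g. Qed.

Lemma Rm_eq x : x \in K -> Rm x = P x *t Qt x.
Proof.
move=> Kx; case: (rep_in Kx) => Kr Ju.
rewrite /Rm /= tensmx_mul (Pmul (inK_G Kr) (inJ_G Ju)).
by rewrite {2}/u mulKVg tensmxZl /Qt tensmxZr.
Qed.

Lemma Rm_J j : j \in J -> Rm j = X j.
Proof. by move=> Jj; rewrite /Rm u_J // rep_J // Tf1 P1 tensmx11 mul1mx. Qed.

Lemma Qt_J j : j \in J -> Qt j = Q j.
Proof.
by move=> Jj; rewrite /Qt u_J // rep_J // alpha1 ?inJ_G // scale1r Tf1 mul1mx.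
Qed.

Lemma Rm_unit x : x \in K -> Rm x \in unitmx.
Proof.
move=> Kx; case: (rep_in Kx) => Kr Ju.
rewrite /Rm unitmx_mul Xunit // andbT tens_unit ?TfU ?Punit ?inK_G //.
  exact: n_gt0.
exact: q_gt0.
Qed.

Lemma Rm_intw x j : x \in K -> j \in J -> Rm x *m X j = X (j ^ x^-1)%g *m Rm x.
Proof.
move=> Kx Jj; case: (rep_in Kx) => Kr Ju.
have nJu' : ((u x)^-1)%g \in 'N(J) by rewrite (subsetP (normG J)) // groupV.
have Jj' : (j ^ (u x)^-1)%g \in J by rewrite memJ_norm.
rewrite /Rm -mulmxA -XM // conjgCV XM // mulmxA TfI // -mulmxA.
by rewrite -conjgM -invMg /u mulKVg.
Qed.

Lemma Rm_mulr x j : x \in K -> j \in J -> Rm (x * j)%g = Rm x *m X j.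
Proof.
move=> Kx Jj; case: (rep_in Kx) => Kr Ju.
by rewrite /Rm rep_mulJ // -mulmxA -XM //; congr (_ *m X _); rewrite /u rep_mulJ // mulgA.
Qed.

Lemma Rm_mull x j : x \in K -> j \in J -> Rm (j * x)%g = X j *m Rm x.
Proof.
move=> Kx Jj; have nJx : x \in 'N(J) := subsetP KnJ x Kx.
by rewrite conjgC Rm_mulr ?memJ_norm // Rm_intw ?memJ_norm // conjgK.
Qed.

Lemma gamma_ex x y : x \in K -> y \in K ->
  exists g, Rm x *m Rm y = g *: Rm (x * y)%g.
Proof.
move=> Kx Ky; have Kxy := groupM Kx Ky; have uxy := Rm_unit Kxy.
pose Z := invmx (Rm (x * y)%g) *m (Rm x *m Rm y).
have cZ j : j \in J -> Z *m X j = X j *m Z.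
  move=> Jj.
  have nJy : y \in 'N(J) := subsetP KnJ y Ky.
  have nJx : x \in 'N(J) := subsetP KnJ x Kx.
  have nJxy : ((x * y)^-1)%g \in 'N(J) by rewrite groupV groupM.
  have h1 : Rm x *m Rm y *m X j = X (j ^ (x * y)^-1)%g *m (Rm x *m Rm y).
    rewrite -mulmxA Rm_intw // mulmxA Rm_intw ?memJ_norm ?groupV //.
    by rewrite -conjgM -invMg mulmxA.
  have h2 : invmx (Rm (x * y)%g) *m X (j ^ (x * y)^-1)%g = X j *m invmx (Rm (x * y)%g).
    move: uxy (Rm_intw Kxy Jj); move: (Rm (x * y)%g) => R0 uR0 e.
    rewrite -[LHS]mulmx1 -(mulmxV uR0) mulmxA -[invmx _ *m _ *m R0]mulmxA -e.
    by rewrite !mulmxA mulVmx // mul1mx.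
  rewrite /Z; move: h1 h2; move: (Rm x *m Rm y) (invmx (Rm (x * y)%g)) => A B h1 h2.
  by rewrite -mulmxA h1 mulmxA h2 mulmxA.
have [g Zg] := schur_repr Xrep psi_irr Xtr cZ.
exists g; rewrite -mul_mx_scalar -Zg /Z; move: uxy.
by move: (Rm (x * y)%g) (Rm x *m Rm y) => R0 A u0; rewrite mulmxA mulmxV // mul1mx.
Qed.


Section WithGamma.
Variable gamma : gT -> gT -> algC.
Hypothesis hgamma : forall x y, x \in K -> y \in K ->
  Rm x *m Rm y = gamma x y *: Rm (x * y)%g.

Lemma nq_gt0 : (0 < n * q)%N. Proof. by rewrite muln_gt0 n_gt0 q_gt0. Qed.

Lemma Rm_neq0 x : x \in K -> Rm x != 0.
Proof. by move=> Kx; apply: unit_neq0 nq_gt0 (Rm_unit Kx). Qed.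

Lemma gamma_r x j : x \in K -> j \in J -> gamma x j = 1.
Proof.
move=> Kx Jj; have := hgamma Kx (inJ_K Jj).
rewrite (Rm_J Jj) -(Rm_mulr Kx Jj) => /esym; apply: scale_id_eq1.
exact: Rm_neq0 (groupM Kx (inJ_K Jj)).
Qed.

Lemma gamma_l x j : x \in K -> j \in J -> gamma j x = 1.
Proof.
move=> Kx Jj; have := hgamma (inJ_K Jj) Kx.
rewrite (Rm_J Jj) -(Rm_mull Kx Jj) => /esym; apply: scale_id_eq1.
exact: Rm_neq0 (groupM (inJ_K Jj) Kx).
Qed.

Lemma Qt_mul x y : x \in K -> y \in K ->
  alpha x y *: (Qt x *m Qt y) = gamma x y *: Qt (x * y)%g.
Proof.
move=> Kx Ky; have Kxy := groupM Kx Ky.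
have := hgamma Kx Ky; rewrite !Rm_eq // tensmx_mul Pmul ?inK_G // tensmxZl.
rewrite -[alpha x y *: (_ *t _)]tensmxZr -[gamma x y *: (_ *t _)]tensmxZr.
by apply: tens_cancel; apply: unit_neq0 n_gt0 (Punit (inK_G Kxy)).
Qed.

Lemma Qt_unit x : x \in K -> Qt x \in unitmx.
Proof.
move=> Kx; case: (rep_in Kx) => Kr Ju.
have anz : alpha (rep x) (u x) != 0.
  apply/eqP => a0; have := Pmul (inK_G Kr) (inJ_G Ju); rewrite a0 scale0r => e.
  have := unit_neq0 n_gt0 (Punit (inK_G Kr)); have := Punit (inJ_G Ju).
  move=> uu nz; move/eqP: e; rewrite -[P (rep x) *m _ == 0]negbK.
  by rewrite (unit_neq0 n_gt0) // unitmx_mul Punit ?inK_G ?inJ_G.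
by rewrite /Qt unitmxZ ?unitfE // unitmx_mul TfU // Qunit.
Qed.


Definition R' x := P' x *t Qt x.

Lemma HG : H \subset G. Proof. by rewrite -NH mulG_subr. Qed.

Lemma inK'_K x : x \in K' -> x \in K.
Proof. by case/setIP => Hx Ix; rewrite inE (subsetP HG) // Ix. Qed.

Lemma inK'_H x : x \in K' -> x \in H.
Proof. by case/setIP. Qed.

Lemma JH_K' x : x \in J :&: H -> x \in K'.
Proof. by case/setIP => Jx Hx; rewrite inE Hx; case/setIP: (inJ_K Jx). Qed.

Lemma R'_unit x : x \in K' -> R' x \in unitmx.
Proof.
move=> K'x; rewrite /R' tens_unit ?P'unit ?Qt_unit ?inK'_K ?inK'_H //.
  exact: m_gt0.
exact: q_gt0.
Qed.

Lemma R'_mul x y : x \in K' -> y \in K' -> R' x *m R' y = gamma x y *: R' (x * y)%g.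
Proof.
move=> K'x K'y; rewrite /R' tensmx_mul P'mul ?inK'_H // tensmxZl -tensmxZr.
by rewrite -aeq ?inK'_H // Qt_mul ?inK'_K // tensmxZr.
Qed.

Lemma R'_JH y : y \in J :&: H -> R' y = P' y *t Q y.
Proof. by case/setIP => Jy _; rewrite /R' Qt_J. Qed.

Lemma R'_as x y : x \in K' -> y \in J :&: H ->
  R' (x * y)%g = R' x *m R' y /\ R' (y * x)%g = R' y *m R' x.
Proof.
move=> K'x JHy; have K'y := JH_K' JHy; have Jy : y \in J by case/setIP: JHy.
rewrite !R'_mul // gamma_r ?gamma_l ?inK'_K //.
by rewrite !scale1r.
Qed.


Lemma Qdecomp j : j \in J -> exists2 h, h \in J :&: H & Q j = Q h.
Proof.
move=> Jj; have : (j^-1)%g \in (N * H)%g by rewrite NH groupV inJ_G.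
case/mulsgP => a b Na Hb e.
have ej : j = (b^-1 * a^-1)%g by rewrite -invMg -e invgK.
have Jh : (b^-1)%g \in J.
  have -> : (b^-1)%g = (j * a)%g by rewrite ej mulgKV.
  by rewrite groupM // inN_J.
exists (b^-1)%g; first by rewrite inE Jh groupV.
by rewrite ej QN // groupV.
Qed.

Lemma Ycomm (C : 'M[algC]_(m * q)) :
  (forall x, x \in J :&: H -> C *m (P' x *t Q x) = (P' x *t Q x) *m C) ->
  exists lam, C = lam%:M.
Proof.
move=> cC.
have MJH : M \subset J :&: H by rewrite defM setSI.
have MN : M \subset N by rewrite defM subsetIl.
have cC' y : y \in M -> C *m (P' y *t 1%:M) = (P' y *t 1%:M) *m C.
  move=> My; have := cC y (subsetP MJH y My).
  rewrite QNone ?(subsetP MN) // Q1 -[(beta 1 1)%:M]scalemx1 tensmxZr.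
  rewrite -scalemxAl -scalemxAr => /(congr1 (fun A => (beta 1 1)^-1 *: A)).
  by rewrite !scalerA mulVf ?beta11 // !scale1r.
have [B defC] := tens_comm_repr P'rep phi_irr P'tr cC'.
have cB x : x \in J -> B *m Q x = Q x *m B.
  move=> Jx; have [h JHh ->] := Qdecomp Jx.
  have := cC h JHh; rewrite defC !tensmx_mul mul1mx mulmx1.
  apply: tens_cancel; apply: unit_neq0 m_gt0 (P'unit _).
  by case/setIP: JHh.
have [lam eB] := proj_schur Qirr cB.
by exists lam; rewrite defC eB tens_scalar_scalar mul1r.
Qed.

Let YR := MxRepresentation Yrep.

Lemma Y_irr : mx_irreducible YR.
Proof.
apply/mx_irrP; split; first by rewrite muln_gt0 m_gt0 q_gt0.
move=> U modU nzU.
have [W modW defUW dxUW] := mx_Maschke_pchar YR (algC'G_pchar _) modU (submx1 U).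
have dx := mxdirect_addsP dxUW.
have cp : centgmx YR (proj_mx U W).
  by rewrite -row_full_dom_hom -sub1mx -defUW proj_mx_hom.
have [a pa] : exists a, proj_mx U W = a%:M.
  by apply: Ycomm => x JHx; apply: (centgmxP cp).
have a1 : a = 1.
  have := proj_mx_id dx (submx_refl U); rewrite pa mul_mx_scalar.
  exact: scale_id_eq1.
have W0 : W = 0.
  by have := proj_mx_0 dx (submx_refl W); rewrite pa a1 mulmx1.
by rewrite -sub1mx -defUW addsmx_sub submx_refl W0 sub0mx.
Qed.

Lemma chi_irr : chi \in irr (J :&: H).
Proof.
apply/irr_reprP; exists (Representation YR); first exact: Y_irr.
exact: (repr_char_eq Yrep Ytr).
Qed.


Lemma K'norm : K' \subset 'N(J :&: H).
Proof.
apply: normsI; last by rewrite subIset // normG.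
by apply/subsetP => x K'x; apply: (subsetP KnJ); apply: inK'_K.
Qed.

Lemma chi_inv : K' \subset 'I[chi].
Proof.
apply/subsetP => h K'h; have nh := subsetP K'norm h K'h.
rewrite inE nh /=; apply/eqP/cfunP => x.
rewrite cfConjgE //.
have nh' : (h^-1)%g \in 'N(J :&: H) by rewrite groupV.
case: (boolP (x \in J :&: H)) => JHx; last first.
  by rewrite !cfun0 ?memJ_norm.
have JHx' : (x ^ h^-1)%g \in J :&: H by rewrite memJ_norm.
rewrite !Ytr // -!R'_JH //.
have e : R' (x ^ h^-1)%g *m R' h = R' h *m R' x.
  by rewrite -(R'_as K'h JHx').2 -(R'_as K'h JHx).1 -conjgCV.
have uh := R'_unit K'h.
have -> : R' (x ^ h^-1)%g = R' h *m R' x *m invmx (R' h).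
  by rewrite -e mulmxK.
by rewrite mxtrace_mulC mulmxA mulVmx // mul1mx.
Qed.

Lemma main_concl : geq_c K psi K' chi Rm R'.
Proof.
split.
- by split; [apply: normal_Inertia | | apply: subsetIr].
- split => //; last exact: chi_inv; last exact: chi_irr.
  by rewrite /normal K'norm andbT; apply/subsetP => x; apply: JH_K'.
- split.
  + apply/eqP; rewrite eqEsubset mul_subG ?JK //=; last first.
      by apply/subsetP => x; apply: inK'_K.
    apply/subsetP => x Kx; have : x \in (N * H)%g by rewrite NH inK_G.
    case/mulsgP => a b Na Hb ex; rewrite ex in Kx *; apply: mem_mulg; first exact: inN_J.
    have Ka : a \in K := inJ_K (inN_J Na).
    have Kb : b \in K by rewrite -(mulKg a b) groupM ?groupV.
    by rewrite inE Hb; case/setIP: Kb.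
  + apply/eqP; rewrite eqEsubset; apply/andP; split; apply/subsetP => x.
      by move=> JHx; rewrite inE (JH_K' JHx) andbT; case/setIP: JHx.
    by case/setIP => Jx K'x; rewrite inE Jx inK'_H.
  + apply/subsetP => c /setIP [Kc Cc].
    have : c \in 'C_G(N) by rewrite inE inK_G // (subsetP (centS NJ)).
    move/(subsetP CGN) => Hc; rewrite inE Hc; by case/setIP: Kc.
- exists gamma, gamma; split => //.
  + split; first by split; [exact: Rm_unit | exact: hgamma].
      split; last by move=> x Jx; rewrite Rm_J // Xtr.
      split; first by rewrite Rm_J ?group1 //; case: Xrep.
      by move=> x y Jx Jy; rewrite !Rm_J ?groupM //; case: Xrep => _; apply.
    by move=> x y Kx Jy; rewrite Rm_mulr // Rm_mull // (Rm_J Jy).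
  + split; first by split; [exact: R'_unit | exact: R'_mul].
      split; last by move=> x JHx; rewrite R'_JH // Ytr.
      split; first by rewrite R'_JH ?group1 //; case: Yrep.
      by move=> x y Jx Jy; rewrite !R'_JH ?groupM //; case: Yrep => _; apply.
    exact: R'_as.
  + move=> c /setIP [Kc Cc].
    have cR j : j \in J -> Rm c *m X j = X j *m Rm c.
      move=> Jj; rewrite Rm_intw //; congr (X _ *m _).
      have Cc' : (c^-1)%g \in 'C(J) by rewrite groupV.
      by rewrite conjgE -(centP Cc' j Jj) mulKg.
    have [b eb] := schur_repr Xrep psi_irr Xtr cR.
    have CGNc : c \in 'C_G(N) by rewrite inE inK_G // (subsetP (centS NJ)).
    have [a [Pa P'a]] := Csc CGNc.
    have nzPc := unit_neq0 n_gt0 (Punit (inK_G Kc)).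
    have anz : a != 0 by apply: contraNneq nzPc => a0; rewrite Pa a0 -scalemx1 scale0r.
    have eQ : Qt c = (b / a)%:M.
      apply: (@tens_cancel _ _ _ _ _ (a%:M : 'M_n)); first by rewrite -Pa.
      by rewrite tens_scalar_scalar mulrC divfK // -Pa -Rm_eq // eb.
    exists b; split => //.
    by rewrite /R' eQ P'a tens_scalar_scalar mulrC divfK.
Qed.

End WithGamma.

Lemma final_Tf : exists (k k' : nat) (R : gT -> 'M[algC]_k) (R'' : gT -> 'M[algC]_k'),
  geq_c K psi K' chi R R''.
Proof.
have hex : forall p : gT * gT, exists g : algC,
   p.1 \in K -> p.2 \in K -> Rm p.1 *m Rm p.2 = g *: Rm (p.1 * p.2)%g.
  case=> x y /=; case: (boolP (x \in K)) => Kx; last first.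
    by exists 0 => /negP.
  case: (boolP (y \in K)) => Ky; last by exists 0 => _ /negP.
  by have [g' hg'] := gamma_ex Kx Ky; exists g'.
have [g hg] := functional_choice _ hex.
exists (n * q)%N, (m * q)%N, Rm, R'.
exact (@main_concl (fun x y => g (x, y)) (fun x y Kx Ky => hg (x, y) Kx Ky)).
Qed.

End WithTf.

Lemma final : exists (k k' : nat) (R : gT -> 'M[algC]_k) (R'' : gT -> 'M[algC]_k'),
  geq_c K psi K' chi R R''.
Proof.
have hex : forall r, exists T : 'M[algC]_q,
   (r = 1%g -> T = 1%:M) /\ (r \in K -> T \in unitmx /\
     forall j, j \in J -> (P r *t T) *m X j = X (j ^ r^-1)%g *m (P r *t T)).
  move=> r; case: (eqVneq r 1%g) => [-> | nr1].
    exists 1%:M; split => // _; split; first exact: unitmx1.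
    by move=> j Jj; rewrite P1 tensmx11 mul1mx mulmx1 invg1 conjg1.
  case: (boolP (r \in K)) => Kr; last by exists 1%:M; split => // /eqP; rewrite (negbTE nr1).
  have [T hT] := EXT Kr; exists T; split => // e.
  by rewrite e eqxx in nr1.
have [Tf hTf] := functional_choice _ hex.
apply: (@final_Tf Tf).
- exact: (hTf 1%g).1.
- by move=> r Kr; case: ((hTf r).2 Kr).
- by move=> r j Kr Jj; case: ((hTf r).2 Kr) => _; apply.
Qed.

End Main.

End Aux.

Local Open Scope ring_scope.

Theorem proposition2p2 (gT : finGroupType) (G N H M J : {group gT})
    (theta : 'CF(N)) (phi : 'CF(M)) (n m : nat)
    (P : gT -> 'M[algC]_n) (P' : gT -> 'M[algC]_m) :
  geq_c G theta H phi P P' ->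
  N \subset J -> J \subset G ->
  forall psi : 'CF(J), irr_over theta psi ->
  forall (q : nat) (Q : gT -> 'M[algC]_q) (beta : gT -> gT -> algC),
    proj_repr J Q beta ->
    (forall x y, x \in J -> y \in J ->
       P x *m P y = (beta x y)^-1 *: P (x * y)%g) ->
    (forall x y, x \in J -> y \in N -> Q (x * y)%g = Q x) ->
    proj_irr J Q ->
    affords (fun x => tensmx (P x) (Q x)) psi ->
  forall chi : 'CF(J :&: H),
    affords (fun x => tensmx (P' x) (Q x)) chi ->
  exists (k k' : nat) (R : gT -> 'M[algC]_k) (R' : gT -> 'M[algC]_k'),
    geq_c ('I_G[psi])%G psi ('I_H[psi])%G chi R R'.
Proof.
move=> [[nNG th_irr _] [nMH phi_irr _] [NH defM CGN]
        [alpha [alpha' [[[Punit Pmul] [Prep Ptr] Pas] [[P'unit P'mul] [P'rep P'tr] P'as] aeq Csc]]]]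
       NJ JG psi [psi_irr _] q Q beta [Qunit Qmul] _ QN Qirr [Xrep Xtr] chi [Yrep Ytr].
by eapply (Aux.final nNG th_irr phi_irr NH defM); eassumption.
Qed.
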